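(* Let $M,H,\overline N\in\mathbb{N}$ with $\overline N\ge H\ge M\ge1$, and let $N(k):=\overline N-(k\bmod M)$ for $k\in\mathbb{N}_0$. Let $\bar k\in\mathbb{N}_0$ and let $(\bar\gamma(k))_{k=0}^{\bar k-1}\subseteq\{0,1\}$ with $\bar\gamma(0)=1$, and define $s(0):=0$, $s(k+1):=0$ if $\bar\gamma(k)=1$ and $s(k+1):=s(k)+1$ if $\bar\gamma(k)=0$. Suppose that for every $k\in\{0,\dots,\bar k-1\}$ there is a schedule $\sigma_k\in\Gamma^H_{N(k)}(s(k))$ with $\sigma_k(0)=\bar\gamma(k)$. Then for every $k\in\{0,\dots,\bar k-H\}$ it holds that $\sum_{i=k}^{k+H-1}\bar\gamma(i)\ge1$.
   Context: For $N,H\in\mathbb{N}$ and $s\in\mathbb{N}_0$, $\Gamma^H_N(s)$ denotes the set of schedules $\sigma=(\sigma(0),\dots,\sigma(N-1))\in\{0,1\}^N$ such that either $N\le H-s-1$, or $\sigma$ contains at least one entry equal to $1$ and, writing $\tau_0<\tau_1<\dots<\tau_{n-1}$ for the indices $j$ with $\sigma(j)=1$, it holds that $\tau_0\le H-s-1$, $\tau_{j+1}-\tau_j\le H$ for all $j\in\{0,\dots,n-2\}$, and $N-\tau_{n-1}\le H-1$. *)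

(* Defs.v *)
From mathcomp Require Import all_boot.
Set Implicit Arguments. Unset Strict Implicit. Unset Printing Implicit Defensive.

(* A schedule of length N is a function sigma : nat -> bool, of which only the
   entries sigma 0, ..., sigma (N-1) are relevant. *)

(* Gamma^H_N(s): membership of sigma.  Indices tau with sigma tau = true,
   tau < N, listed increasingly tau_0 < ... < tau_{n-1}. *)
Definition in_Gamma (H N s : nat) (sigma : nat -> bool) : Prop :=
  (* N <= H - s - 1 (integer arithmetic) *)
  (N + s + 1 <= H) \/
  ( (exists j, j < N /\ sigma j)
    /\ (* tau_0 <= H - s - 1 *)
       (forall t, t < N -> sigma t -> (forall j, j < t -> ~~ sigma j) ->
           t + s + 1 <= H)
    /\ (* consecutive ones: tau_{j+1} - tau_j <= H *)
       (forall t1 t2, t1 < t2 -> t2 < N -> sigma t1 -> sigma t2 ->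
           (forall j, t1 < j < t2 -> ~~ sigma j) -> t2 - t1 <= H)
    /\ (* N - tau_{n-1} <= H - 1 *)
       (forall t, t < N -> sigma t -> (forall j, t < j < N -> ~~ sigma j) ->
           N - t + 1 <= H) ).

Fixpoint sfun (gamma : nat -> bool) (k : nat) : nat :=
  match k with
  | 0 => 0
  | k'.+1 => if gamma k' then 0 else (sfun gamma k').+1
  end.

Definition Nk (Nbar M k : nat) : nat := Nbar - (k %% M).

(* Main.v *)
Require Import Defs.
From mathcomp Require Import all_boot.
From mathcomp Require Import zify.

Lemma sfun_grow (gamma : nat -> bool) k n :
  (forall i, k <= i < k + n -> ~~ gamma i) -> n <= sfun gamma (k + n).
Proof.
elim: n => [|n IH] H0; first by [].
rewrite addnS /=.
have -> : gamma (k + n) = false.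
  by apply/negbTE/H0; lia.
have : n <= sfun gamma (k + n) by apply: IH => i Hi; apply: H0; lia.
lia.
Qed.

Lemma window (gamma : nat -> bool) k n :
  (forall i, k <= i < k + n -> ~~ gamma i) \/ 1 <= \sum_(k <= i < k + n) (gamma i : nat).
Proof.
elim: n => [|n [IH|IH]].
- left => i; lia.
- case E: (gamma (k + n)).
  + right; rewrite addnS big_nat_recr /=; last lia.
    rewrite E; lia.
  + left => i Hi.
    have [->|ne] := eqVneq i (k + n); first by rewrite E.
    apply: IH; lia.
- right; rewrite addnS big_nat_recr /=; last lia.
  lia.
Qed.

Theorem lemma6 (M H Nbar kbar : nat) (gamma : nat -> bool) :
  1 <= M -> M <= H -> H <= Nbar ->
  (0 < kbar -> gamma 0 = true) ->
  (forall k, k < kbar ->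
     exists sigma : nat -> bool,
       in_Gamma H (Nk Nbar M k) (sfun gamma k) sigma /\ sigma 0 = gamma k) ->
  forall k, k + H <= kbar ->
    1 <= \sum_(k <= i < k + H) (gamma i : nat).
Proof.
move=> HM HMH HHN _ Hs k Hk.
case: (window gamma k H) => [Z|//].
exfalso.
have Hgr : H.-1 <= sfun gamma (k + H.-1).
  apply: sfun_grow => i Hi; apply: Z; lia.
have [sigma [Hin H0]] := Hs (k + H.-1) ltac:(lia).
have Hg : gamma (k + H.-1) = false by apply/negbTE/Z; lia.
rewrite Hg in H0.
have HN : 1 <= Nk Nbar M (k + H.-1).
  rewrite /Nk; have := ltn_pmod (k + H.-1) HM; lia.
case: Hin => [C|[[j [Hj Sj]] [Hfirst _]]]; first lia.
have ex : exists j, (j < Nk Nbar M (k + H.-1)) && sigma j.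
  by exists j; rewrite Hj Sj.
case: (ex_minnP ex) => t /andP [Ht St] Hmin.
have := Hfirst t Ht St.
have Ht0 : 0 < t.
  by case: t Ht St {Hmin} => [|//]; rewrite H0.
move=> F.
have : t + sfun gamma (k + H.-1) + 1 <= H.
  apply: F => i Hi; apply/negP => Si.
  have := Hmin i; rewrite Si andbT.
  have -> : i < Nk Nbar M (k + H.-1) by lia.
  move=> /(_ isT); lia.
lia.
Qed.
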